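(* Let $\mathcal{H}$ be a finite-dimensional Hilbert space, $\{\rho_\theta;\theta\in\Theta\subset\mathbb{R}^d\}$ a smooth family of density operators, and $\theta_0\in\Theta$ with $\rho=\rho_{\theta_0}$ strictly positive. The following conditions are equivalent: (i) $\operatorname{span}_{\mathbb{R}}\{\partial_i\rho\}_{i=1}^d$ is $\mathcal{D}_\rho$ invariant; (ii) $\operatorname{span}_{\mathbb{R}}\{L_i^{(S)}\}_{i=1}^d$ is $\mathcal{D}_\rho$ invariant; (ii)' $\operatorname{span}_{\mathbb{C}}\{L_i^{(S)}\}_{i=1}^d$ is $\mathcal{D}_\rho$ invariant; (iii) $\operatorname{span}_{\mathbb{C}}\{L_i^{(S)}\}_{i=1}^d=\operatorname{span}_{\mathbb{C}}\{L_i^{(\beta)}\}_{i=1}^d$ for every $\beta\in[0,1]$; (iv) $(J^{(\beta)}_{\theta_0})^{-1}=(J^{(S)}_{\theta_0})^{-1}(\operatorname{Re}Z+\beta\sqrt{-1}\operatorname{Im}Z)(J^{(S)}_{\theta_0})^{-1}$ for every $\beta\in[0,1]$, where $Z=[\operatorname{Tr}L_i^{(S)}\rho L_j^{(S)}]_{ij}$.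
   Context: $\partial_i\rho=\frac{\partial}{\partial\theta^i}\rho_\theta|_{\theta=\theta_0}$. The commutation operator $\mathcal{D}_\rho$ on $\mathcal{B}(\mathcal{H})$ is defined by $\mathcal{D}_\rho(X)\rho+\rho\mathcal{D}_\rho(X)=\sqrt{-1}(X\rho-\rho X)$; a subspace $W$ is $\mathcal{D}_\rho$ invariant if $\mathcal{D}_\rho(W)\subset W$. For $\beta\in[0,1]$, $L_i^{(\beta)}$ is defined by $\partial_i\rho=\frac{1+\beta}{2}\rho L_i^{(\beta)}+\frac{1-\beta}{2}L_i^{(\beta)}\rho$, with $L_i^{(S)}=L_i^{(0)}$ the SLDs (assumed linearly independent). With $\langle X,Y\rangle^{(\beta)}=\frac12\operatorname{Tr}X^*\{(1+\beta)\rho Y+(1-\beta)Y\rho\}$, $J^{(\beta)}_{\theta_0}=[\langle L_i^{(\beta)},L_j^{(\beta)}\rangle^{(\beta)}]_{ij}$ and $J^{(S)}_{\theta_0}=J^{(0)}_{\theta_0}$. Re, Im entrywise. *)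

(* Defs.v *)
(* operators on a finite-dimensional complex Hilbert space
   C^n are n x n matrices over C := R[i] (complex numbers over the real
   numbers R : realType, from mathcomp-real-closed's complex.v). *)
From HB Require Import structures.
From mathcomp Require Import all_boot all_order all_algebra.
From mathcomp Require Import complex.
From mathcomp Require Import reals.

Set Implicit Arguments.
Unset Strict Implicit.
Unset Printing Implicit Defensive.

Import Order.TTheory GRing.Theory Num.Theory.
Local Open Scope ring_scope.

Section QDefs.
Variable R : rcfType.
Local Notation C := R[i].

Definition iC : C := 'i.

Definition cR (x : R) : C := (x%:C)%C.

Definition adjmx (m n : nat) (A : 'M[C]_(m, n)) : 'M[C]_(n, m) :=
  (map_mx Num.conj A)^T.

Definition herm_op (n : nat) (A : 'M[C]_n) : Prop := adjmx A = A.

Definition psd (n : nat) (A : 'M[C]_n) : Prop :=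
  herm_op A /\ forall v : 'cV[C]_n, 0 <= (adjmx v *m A *m v) 0 0.

Definition strictly_positive (n : nat) (A : 'M[C]_n) : Prop :=
  herm_op A /\ forall v : 'cV[C]_n, v != 0 -> 0 < (adjmx v *m A *m v) 0 0.

Definition density (n : nat) (rho : 'M[C]_n) : Prop := psd rho /\ \tr rho = 1.

Definition Rspan (n d : nat) (A : 'I_d -> 'M[C]_n) (X : 'M[C]_n) : Prop :=
  exists c : 'I_d -> R, X = \sum_(i < d) cR (c i) *: A i.

Definition Cspan (n d : nat) (A : 'I_d -> 'M[C]_n) (X : 'M[C]_n) : Prop :=
  exists c : 'I_d -> C, X = \sum_(i < d) c i *: A i.

Definition R_lin_indep (n d : nat) (A : 'I_d -> 'M[C]_n) : Prop :=
  forall c : 'I_d -> R, \sum_(i < d) cR (c i) *: A i = 0 -> forall i, c i = 0.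

(* Y = D_rho(X)  iff  Y rho + rho Y = sqrt(-1) (X rho - rho X)
   (for strictly positive rho this determines Y uniquely) *)
Definition commutation_op_rel (n : nat) (rho X Y : 'M[C]_n) : Prop :=
  Y *m rho + rho *m Y = iC *: (X *m rho - rho *m X).

Definition D_invariant (n : nat) (rho : 'M[C]_n) (W : 'M[C]_n -> Prop) : Prop :=
  forall X Y, W X -> commutation_op_rel rho X Y -> W Y.

Definition beta_LD_eq (n : nat) (beta : R) (rho drho L : 'M[C]_n) : Prop :=
  drho = cR ((1 + beta) / 2) *: (rho *m L) + cR ((1 - beta) / 2) *: (L *m rho).

Definition ip_beta (n : nat) (beta : R) (rho X Y : 'M[C]_n) : C :=
  2^-1 * \tr (adjmx X *m (cR (1 + beta) *: (rho *m Y) + cR (1 - beta) *: (Y *m rho))).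

Definition Jbeta (n d : nat) (beta : R) (rho : 'M[C]_n) (L : 'I_d -> 'M[C]_n)
  : 'M[C]_d := \matrix_(i < d, j < d) ip_beta beta rho (L i) (L j).

Definition Zmat (n d : nat) (rho : 'M[C]_n) (L : 'I_d -> 'M[C]_n) : 'M[C]_d :=
  \matrix_(i < d, j < d) \tr (L i *m rho *m L j).

Definition Re_mx (d : nat) (M : 'M[C]_d) : 'M[C]_d := map_mx (fun z => 'Re z) M.
Definition Im_mx (d : nat) (M : 'M[C]_d) : 'M[C]_d := map_mx (fun z => 'Im z) M.

End QDefs.
Arguments iC {R}.

(* Main.v *)
Require Import Defs.
From HB Require Import structures.
From mathcomp Require Import all_boot all_order all_algebra.
From mathcomp Require Import complex.
From mathcomp Require Import reals.
From mathcomp Require Import ring.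
Import Order.TTheory GRing.Theory Num.Theory.
Local Open Scope ring_scope.
Set Implicit Arguments.
Unset Strict Implicit.
Unset Printing Implicit Defensive.


Section Adj.
Variable R : rcfType.
Local Notation C := R[i].

Lemma iC_def : (iC : C) = 'i%C.
Proof. reflexivity. Qed.

Lemma conj_def (z : C) : z^* = (z^*)%C.
Proof. reflexivity. Qed.

Lemma cR_conj (x : R) : (cR x)^* = cR x.
Proof. by rewrite conj_def /cR conjc_real. Qed.

Lemma cR_decomp (z : C) : exists a b : R, z = cR a + iC * cR b.
Proof. exists (complex.Re z), (complex.Im z). by rewrite /cR iC_def -complexE. Qed.

Lemma cR_add (a b : R) : cR (a + b) = cR a + cR b.
Proof. by rewrite /cR rmorphD. Qed.
Lemma cR_mul (a b : R) : cR (a * b) = cR a * cR b.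
Proof. by rewrite /cR rmorphM. Qed.
Lemma cR0 : cR 0 = 0 :> C. Proof. by rewrite /cR rmorph0. Qed.
Lemma cR1 : cR 1 = 1 :> C. Proof. by rewrite /cR rmorph1. Qed.
Lemma cR_gt0 (a : R) : (0 < cR a) = (0 < a).
Proof. by rewrite /cR ltcR. Qed.
Lemma cR_ge0 (a : R) : (0 <= cR a) = (0 <= a).
Proof. by rewrite /cR lecR. Qed.
Lemma cR_inj : injective (@cR R).
Proof. exact: complexI. Qed.
Lemma conj_iC : (iC : C)^* = - iC.
Proof. exact: conjCi. Qed.

Lemma adjmxK m n (A : 'M[C]_(m,n)) : adjmx (adjmx A) = A.
Proof. by apply/matrixP=> i j; rewrite !mxE conjCK. Qed.

Lemma adjmxM m n p (A : 'M[C]_(m,n)) (B : 'M[C]_(n,p)) :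
  adjmx (A *m B) = adjmx B *m adjmx A.
Proof.
apply/matrixP=> i j; rewrite !mxE rmorph_sum; apply: eq_bigr => k _.
by rewrite !mxE rmorphM mulrC.
Qed.

Lemma adjmxD m n (A B : 'M[C]_(m,n)) : adjmx (A + B) = adjmx A + adjmx B.
Proof. by apply/matrixP=> i j; rewrite !mxE rmorphD. Qed.

Lemma adjmxN m n (A : 'M[C]_(m,n)) : adjmx (- A) = - adjmx A.
Proof. by apply/matrixP=> i j; rewrite !mxE rmorphN. Qed.

Lemma adjmxB m n (A B : 'M[C]_(m,n)) : adjmx (A - B) = adjmx A - adjmx B.
Proof. by rewrite adjmxD adjmxN. Qed.

Lemma adjmxZ m n (c : C) (A : 'M[C]_(m,n)) : adjmx (c *: A) = c^* *: adjmx A.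
Proof. by apply/matrixP=> i j; rewrite !mxE rmorphM. Qed.

Lemma adjmx0 m n : adjmx (0 : 'M[C]_(m,n)) = 0.
Proof. by apply/matrixP=> i j; rewrite !mxE rmorph0. Qed.

Lemma adjmx1 m : adjmx (1%:M : 'M[C]_m) = 1%:M.
Proof. by apply/matrixP=> i j; rewrite !mxE eq_sym; case: (i == j); rewrite ?rmorph1 ?rmorph0. Qed.

Lemma adjmx_sum m n (I : finType) (F : I -> 'M[C]_(m,n)) :
  adjmx (\sum_i F i) = \sum_i adjmx (F i).
Proof.
apply/matrixP=> i j; rewrite !mxE !summxE rmorph_sum; apply: eq_bigr => k _.
by rewrite !mxE.
Qed.

Lemma tr_adj m (A : 'M[C]_m) : \tr (adjmx A) = (\tr A)^*.
Proof. rewrite /mxtrace rmorph_sum; apply: eq_bigr => i _; by rewrite !mxE. Qed.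

End Adj.

Section Pos.
Variable R : rcfType.
Local Notation C := R[i].
Variable n : nat.
Variable rho : 'M[C]_n.
Hypothesis rho_herm : adjmx rho = rho.
Hypothesis rho_pos : forall v : 'cV[C]_n, v != 0 -> 0 < (adjmx v *m rho *m v) 0 0.

Lemma diag_col (X : 'M[C]_n) k :
  (adjmx X *m rho *m X) k k = (adjmx (col k X) *m rho *m col k X) 0 0.
Proof.
rewrite !mxE; apply: eq_bigr => l _; rewrite !mxE; congr (_ * _).
by apply: eq_bigr => m _; rewrite !mxE.
Qed.

Lemma form_ge0 (v : 'cV[C]_n) : 0 <= (adjmx v *m rho *m v) 0 0.
Proof.
have [->|nz] := eqVneq v 0; last exact: ltW (rho_pos nz).
by rewrite mulmx0 mxE.
Qed.

Lemma trpos_ge0 (X : 'M[C]_n) : 0 <= \tr (adjmx X *m rho *m X).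
Proof. rewrite /mxtrace; apply: sumr_ge0 => k _; rewrite diag_col; exact: form_ge0. Qed.

Lemma trpos_eq0 (X : 'M[C]_n) : \tr (adjmx X *m rho *m X) = 0 -> X = 0.
Proof.
rewrite /mxtrace => /eqP; rewrite psumr_eq0 => [/allP H|k _]; last first.
  by rewrite diag_col; exact: form_ge0.
apply/matrixP => i k; rewrite mxE.
have /eqP := H k (mem_index_enum _); rewrite diag_col => E.
have : col k X = 0.
  apply/eqP; apply: contraT => nz; have := rho_pos nz; by rewrite E ltxx.
by move/matrixP/(_ i 0); rewrite !mxE.
Qed.

Lemma trpos2_ge0 (X : 'M[C]_n) : 0 <= \tr (adjmx X *m X *m rho).
Proof.
have := trpos_ge0 (adjmx X); rewrite adjmxK => h.
by rewrite -mulmxA mxtrace_mulC.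
Qed.

Lemma pos_comb (a b : R) (X : 'M[C]_n) : 0 < a -> 0 <= b ->
  cR a * \tr (adjmx X *m rho *m X) + cR b * \tr (adjmx X *m X *m rho) = 0 -> X = 0.
Proof.
move=> a0 b0 E2.
apply: trpos_eq0.
have h1 := trpos_ge0 X; have h2 := trpos2_ge0 X.
have ha : 0 < cR a by rewrite cR_gt0.
have hb : 0 <= cR b by rewrite cR_ge0.
have : cR a * \tr (adjmx X *m rho *m X) <= 0.
  have -> : cR a * \tr (adjmx X *m rho *m X) = - (cR b * \tr (adjmx X *m X *m rho)).
    by apply/eqP; rewrite -addr_eq0 E2.
  by rewrite oppr_le0 mulr_ge0.
have : 0 <= cR a * \tr (adjmx X *m rho *m X) by rewrite mulr_ge0 // ltW.
move=> p q; have : cR a * \tr (adjmx X *m rho *m X) = 0 by apply/eqP; rewrite eq_le p q.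
by move/eqP; rewrite mulf_eq0 gt_eqF //= => /eqP.
Qed.

Lemma uniq_ab (a b : R) (X : 'M[C]_n) : 0 < a -> 0 <= b ->
  cR a *: (rho *m X) + cR b *: (X *m rho) = 0 -> X = 0.
Proof.
move=> a0 b0 E; apply: (pos_comb a0 b0).
have : \tr (adjmx X *m (cR a *: (rho *m X) + cR b *: (X *m rho))) = 0.
  by rewrite E mulmx0 mxtrace0.
by rewrite mulmxDr -!scalemxAr mxtraceD !mxtraceZ !mulmxA.
Qed.

End Pos.


Lemma unit_of_ker (F : fieldType) d (M : 'M[F]_d) :
  (forall x : 'cV_d, M *m x = 0 -> x = 0) -> M \in unitmx.
Proof.
move=> H; rewrite unitmxE unitfE -det_tr; apply/negP => /det0P [v nz vM].
have : M *m v^T = 0 by rewrite -[M]trmxK -trmx_mul vM trmx0.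
move/H => /(congr1 trmx); rewrite trmxK trmx0 => v0.
by rewrite v0 eqxx in nz.
Qed.

Section Sylv.
Variable F : fieldType.
Variable n : nat.
Variable rho : 'M[F]_n.
Definition sylv (Y : 'M[F]_n) := Y *m rho + rho *m Y.
Fact sylv_is_semilinear : semilinear sylv.
Proof.
split=> [a A|A B]; rewrite /sylv.
  by rewrite -scalemxAl -scalemxAr scalerDr.
by rewrite mulmxDl mulmxDr addrACA.
Qed.
HB.instance Definition _ :=
  GRing.isSemilinear.Build F 'M[F]_n 'M[F]_n _ sylv sylv_is_semilinear.

Lemma sylv_surj : (forall Y, sylv Y = 0 -> Y = 0) -> forall K, exists Y, sylv Y = K.
Proof.
move=> inj K.
have U : lin_mx sylv \in unitmx.
  rewrite -row_free_unit; apply: inj_row_free => v.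
  rewrite -[v]vec_mxK mul_vec_lin => /(congr1 vec_mx); rewrite mxvecK linear0.
  by move/inj => ->; rewrite linear0.
exists (vec_mx (mxvec K *m invmx (lin_mx sylv))).
apply: (can_inj (@mxvecK _ _ _)).
by rewrite -mul_vec_lin vec_mxK mulmxKV.
Qed.
End Sylv.


Lemma comb2 (K : pzRingType) (V : lmodType K) (P Q : V) (a b c d e : K) :
  a = c - e -> b = d + e -> a *: P + b *: Q = c *: P + d *: Q + e *: (Q - P).
Proof.
move=> -> ->; rewrite scalerBl scalerDl scalerBr addrACA; congr (_ + _).
by rewrite addrC.
Qed.

Section Rel.
Variable R : rcfType.
Local Notation C := R[i].
Variable n : nat.
Variable rho : 'M[C]_n.
Hypothesis rho_herm : adjmx rho = rho.
Hypothesis rho_pos : forall v : 'cV[C]_n, v != 0 -> 0 < (adjmx v *m rho *m v) 0 0.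

Local Notation rel := (commutation_op_rel rho).

Lemma uniq11 (X : 'M[C]_n) : X *m rho + rho *m X = 0 -> X = 0.
Proof.
move=> E; apply: (uniq_ab rho_pos (a := 1) (b := 1)) => //.
by rewrite cR1 !scale1r addrC.
Qed.

Lemma rel_uniq X Y1 Y2 : rel X Y1 -> rel X Y2 -> Y1 = Y2.
Proof.
rewrite /commutation_op_rel => E1 E2; apply/eqP; rewrite -subr_eq0; apply/eqP.
apply: uniq11; rewrite mulmxBl mulmxBr addrACA -opprD E1 E2.
by rewrite addrN.
Qed.

Lemma rel_ex X : exists Y, rel X Y.
Proof.
have := @sylv_surj _ _ rho _ (iC *: (X *m rho - rho *m X)).
case=> [Y|Y E]; last by exists Y; exact: E.
exact: uniq11.
Qed.

Lemma rel_add X1 Y1 X2 Y2 : rel X1 Y1 -> rel X2 Y2 -> rel (X1 + X2) (Y1 + Y2).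
Proof.
rewrite /commutation_op_rel => E1 E2.
rewrite mulmxDl mulmxDr addrACA E1 E2 -scalerDr; congr (_ *: _).
by rewrite mulmxDl mulmxDr opprD addrACA.
Qed.

Lemma rel_scale c X Y : rel X Y -> rel (c *: X) (c *: Y).
Proof.
rewrite /commutation_op_rel => E.
rewrite -scalemxAl -scalemxAr -scalerDr E -scalemxAl -scalemxAr -scalerBr.
by rewrite !scalerA mulrC.
Qed.

Lemma rel0 : rel 0 0.
Proof. by rewrite /commutation_op_rel !mul0mx !mulmx0 subrr addr0 scaler0. Qed.

Lemma rel_sum (I : finType) (c : I -> C) (X Y : I -> 'M[C]_n) :
  (forall i, rel (X i) (Y i)) -> rel (\sum_i c i *: X i) (\sum_i c i *: Y i).
Proof.
move=> H; apply: (big_ind2 rel); first exact: rel0.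
  by move=> ? ? ? ?; exact: rel_add.
by move=> i _; apply: rel_scale.
Qed.

Lemma rel_adj X Y : rel X Y -> rel (adjmx X) (adjmx Y).
Proof.
rewrite /commutation_op_rel => E.
have := congr1 (@adjmx _ _ _) E.
rewrite adjmxD !adjmxM rho_herm adjmxZ adjmxB !adjmxM rho_herm conj_iC => E'.
by rewrite addrC E' scaleNr -scalerN opprB.
Qed.

Lemma rel_herm X Y : adjmx X = X -> rel X Y -> adjmx Y = Y.
Proof.
move=> hX E; apply: (rel_uniq _ E); by rewrite -{1}hX; apply: rel_adj.
Qed.

Definition Sb (b : R) (M : 'M[C]_n) : 'M[C]_n :=
  cR ((1 + b) / 2) *: (rho *m M) + cR ((1 - b) / 2) *: (M *m rho).

Fact Sb_is_semilinear b : semilinear (Sb b).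
Proof.
split=> [a A|A B]; rewrite /Sb.
  by rewrite -scalemxAl -scalemxAr !scalerA scalerDr !scalerA (mulrC a) (mulrC a).
by rewrite mulmxDl mulmxDr !scalerDr addrACA.
Qed.
HB.instance Definition _ b :=
  GRing.isSemilinear.Build C 'M[C]_n 'M[C]_n _ (Sb b) (Sb_is_semilinear b).

Lemma Sb_inj b X Y : 0 <= b <= 1 -> Sb b X = Sb b Y -> X = Y.
Proof.
case/andP=> b0 b1 E; apply/eqP; rewrite -subr_eq0; apply/eqP.
apply: (uniq_ab rho_pos (a := (1 + b) / 2) (b := (1 - b) / 2)).
- by rewrite divr_gt0 // ltr_wpDr.
- by rewrite divr_ge0 // subr_ge0.
by have := congr1 (fun M => M - Sb b Y) E; rewrite subrr -linearB.
Qed.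

Lemma cR_half : cR (2^-1) = 2^-1 :> C.
Proof. by rewrite /cR fmorphV rmorph_nat. Qed.

Lemma iCiC : iC * iC = -1 :> C.
Proof. by rewrite -expr2 sqrCi. Qed.

Lemma iCmul (x y : C) : iC * x * (y * iC) = - (x * y).
Proof.
have -> : iC * x * (y * iC) = (iC * iC) * (x * y) by ring.
by rewrite iCiC mulN1r.
Qed.

Lemma Kb b X Y : rel X Y -> Sb b X = Sb 0 (X + (iC * cR b) *: Y).
Proof.
rewrite /commutation_op_rel => E.
rewrite linearD linearZ /=.
have -> : Sb 0 Y = cR (2^-1) *: (iC *: (X *m rho - rho *m X)).
  by rewrite -E /Sb subr0 addr0 mul1r -scalerDr addrC.
rewrite /Sb scalerA scalerA.
apply: comb2; rewrite iCmul -cR_mul /cR -?rmorphN -?rmorphB -?rmorphD;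
  by congr (_%:C)%C; field.
Qed.

End Rel.


Section Span.
Variable R : rcfType.
Local Notation C := R[i].
Variables n d : nat.
Implicit Types f g : 'I_d -> 'M[C]_n.

Definition famM f (M : 'M[C]_d) : 'I_d -> 'M[C]_n := fun k => \sum_j M j k *: f j.
Definition lc (c : 'I_d -> C) f := \sum_j c j *: f j.

Lemma Cspan_sum (I : finType) (c : I -> C) (X : I -> 'M[C]_n) f :
  (forall i, Cspan f (X i)) -> Cspan f (\sum_i c i *: X i).
Proof.
move=> H; have [e He] := fin_all_exists H.
exists (fun j => \sum_i c i * e i j).
under eq_bigr => i _ do rewrite He scaler_sumr.
rewrite exchange_big /=; apply: eq_bigr => j _.
by rewrite scaler_suml; apply: eq_bigr => i _; rewrite scalerA.
Qed.

Lemma Cspan_self f k : Cspan f (f k).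
Proof.
exists (fun j => (j == k)%:R); rewrite (bigD1 k) //= eqxx scale1r big1 ?addr0 //.
by move=> j /negbTE ->; rewrite scale0r.
Qed.

Lemma Cspan_add f X Y : Cspan f X -> Cspan f Y -> Cspan f (X + Y).
Proof.
case=> a -> [b ->]; exists (fun j => a j + b j).
by rewrite -big_split; apply: eq_bigr => j _; rewrite scalerDl.
Qed.

Lemma Cspan_scale f c X : Cspan f X -> Cspan f (c *: X).
Proof.
case=> a ->; exists (fun j => c * a j).
by rewrite scaler_sumr; apply: eq_bigr => j _; rewrite scalerA.
Qed.

Lemma Cspan_trans f g X : (forall k, Cspan g (f k)) -> Cspan f X -> Cspan g X.
Proof. by move=> H [c ->]; apply: Cspan_sum. Qed.

Lemma Cspan_famM f M k : Cspan f (famM f M k).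
Proof. by exists (fun j => M j k). Qed.

Lemma Rspan_Cspan f X : Rspan f X -> Cspan f X.
Proof. by case=> c ->; exists (fun j => cR (c j)). Qed.

Lemma famM_comp f P Q k : famM (famM f P) Q k = famM f (P *m Q) k.
Proof.
rewrite /famM.
under eq_bigr => i _ do rewrite scaler_sumr.
rewrite exchange_big /=; apply: eq_bigr => j _.
rewrite mxE scaler_suml; apply: eq_bigr => i _; by rewrite scalerA mulrC.
Qed.

Lemma famM_1 f k : famM f 1%:M k = f k.
Proof.
rewrite /famM (bigD1 k) //= mxE eqxx scale1r big1 ?addr0 //.
by move=> j /negbTE jk; rewrite mxE jk scale0r.
Qed.

Lemma famMD f P Q k : famM f (P + Q) k = famM f P k + famM f Q k.
Proof. by rewrite /famM -big_split; apply: eq_bigr => j _; rewrite mxE scalerDl. Qed.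

Lemma famMZ f a P k : famM f (a *: P) k = a *: famM f P k.
Proof. by rewrite /famM scaler_sumr; apply: eq_bigr => j _; rewrite mxE scalerA. Qed.

Lemma lc_famM c f M : lc c (famM f M) = lc (fun j => \sum_k M j k * c k) f.
Proof.
rewrite /lc /famM.
under eq_bigr => i _ do rewrite scaler_sumr.
rewrite exchange_big /=; apply: eq_bigr => j _.
rewrite scaler_suml; apply: eq_bigr => i _; by rewrite scalerA mulrC.
Qed.

Lemma decomp (c : 'I_d -> C) :
  exists a b : 'I_d -> R, forall i, c i = cR (a i) + iC * cR (b i).
Proof.
have [a Ha] := fin_all_exists (fun i => cR_decomp (c i)).
have [b Hb] := fin_all_exists Ha.
by exists a, b.
Qed.

Lemma lc_decomp (a b : 'I_d -> R) f :
  \sum_j (cR (a j) + iC * cR (b j)) *: f j =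
  \sum_j cR (a j) *: f j + iC *: \sum_j cR (b j) *: f j.
Proof.
rewrite scaler_sumr -big_split; apply: eq_bigr => j _.
by rewrite scalerDl scalerA.
Qed.

Lemma herm_Rcomb (a : 'I_d -> R) f : (forall i, adjmx (f i) = f i) ->
  adjmx (\sum_i cR (a i) *: f i) = \sum_i cR (a i) *: f i.
Proof.
move=> H; rewrite adjmx_sum; apply: eq_bigr => i _.
by rewrite adjmxZ cR_conj H.
Qed.

End Span.

Section Herm.
Variable R : rcfType.
Local Notation C := R[i].
Variable n : nat.

Lemma herm_zero (P Q : 'M[C]_n) : adjmx P = P -> adjmx Q = Q ->
  P + iC *: Q = 0 -> P = 0 /\ Q = 0.
Proof.
move=> hP hQ E.
have E' : P - iC *: Q = 0.
  by have := congr1 (@adjmx _ _ _) E; rewrite adjmxD adjmxZ hP hQ conj_iC adjmx0 scaleNr.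
have P0 : P = 0.
  have : (P + iC *: Q) + (P - iC *: Q) = 0 by rewrite E E' addr0.
  rewrite addrACA subrr addr0 -mulr2n.
  by move/eqP; rewrite -scaler_nat scaler_eq0 pnatr_eq0 /= => /eqP.
split=> //; move: E; rewrite P0 add0r => /eqP; rewrite scaler_eq0.
by case/orP=> [/eqP iC0|/eqP //]; move: (neq0Ci C); rewrite -/iC iC0 eqxx.
Qed.

End Herm.


Section IP.
Variable R : rcfType.
Local Notation C := R[i].
Variable n : nat.
Variable rho : 'M[C]_n.
Hypothesis rho_pos : forall v : 'cV[C]_n, v != 0 -> 0 < (adjmx v *m rho *m v) 0 0.

Lemma tr_lin_r (I : finType) (X : 'M[C]_n) (c : I -> C) (Y : I -> 'M[C]_n) :
  \tr (X *m (\sum_j c j *: Y j)) = \sum_j c j * \tr (X *m Y j).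
Proof.
rewrite mulmx_sumr linear_sum; apply: eq_bigr => j _.
by rewrite /= -scalemxAr mxtraceZ.
Qed.

Lemma tr_lin_l (I : finType) (Y : 'M[C]_n) (c : I -> C) (X : I -> 'M[C]_n) :
  \tr (adjmx (\sum_j c j *: X j) *m Y) = \sum_j (c j)^* * \tr (adjmx (X j) *m Y).
Proof.
rewrite adjmx_sum mulmx_suml linear_sum; apply: eq_bigr => j _.
by rewrite /= adjmxZ -scalemxAl mxtraceZ.
Qed.

Lemma ipb_Sb b X Y : ip_beta b rho X Y = \tr (adjmx X *m Sb rho b Y).
Proof.
rewrite /ip_beta /Sb -mxtraceZ scalemxAr scalerDr !scalerA -cR_half -!cR_mul.
by rewrite (mulrC 2^-1) (mulrC 2^-1).
Qed.

Lemma ipb_pos b X : 0 <= b <= 1 -> ip_beta b rho X X = 0 -> X = 0.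
Proof.
case/andP=> b0 b1; rewrite /ip_beta => /eqP; rewrite mulf_eq0 invr_eq0 pnatr_eq0 /=.
move=> /eqP E; apply: (pos_comb rho_pos (a := 1 + b) (b := 1 - b)).
- by rewrite ltr_wpDr.
- by rewrite subr_ge0.
by rewrite -E mulmxDr -!scalemxAr mxtraceD !mxtraceZ !mulmxA.
Qed.

Lemma Sb_sumg b (I : finType) (c : I -> C) (f : I -> 'M[C]_n) :
  Sb rho b (\sum_i c i *: f i) = \sum_i c i *: Sb rho b (f i).
Proof. by rewrite linear_sum; apply: eq_bigr => i _; rewrite linearZ. Qed.

Lemma gram_unit d b (f : 'I_d -> 'M[C]_n) : 0 <= b <= 1 ->
  (forall c, \sum_j c j *: f j = 0 -> forall i, c i = 0) -> Jbeta b rho f \in unitmx.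
Proof.
move=> hb ind; apply: unit_of_ker => x Hx.
apply/matrixP => i k; rewrite ord1 mxE; move: i; apply: ind.
apply: (ipb_pos (b := b)) => //.
rewrite ipb_Sb Sb_sumg tr_lin_l big1 // => i _.
rewrite tr_lin_r.
have -> : \sum_j x j 0 * \tr (adjmx (f i) *m Sb rho b (f j)) = (Jbeta b rho f *m x) i 0.
  by rewrite mxE; apply: eq_bigr => j _; rewrite mxE ipb_Sb mulrC.
by rewrite Hx mxE mulr0.
Qed.

End IP.

Section ReIm.
Variable R : rcfType.
Local Notation C := R[i].

Lemma conj_Re (z : C) : ('Re z)^* = 'Re z.
Proof. exact: conj_Creal (Creal_Re z). Qed.
Lemma conj_Im (z : C) : ('Im z)^* = 'Im z.
Proof. exact: conj_Creal (Creal_Im z). Qed.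

Lemma herm_entry d (Z : 'M[C]_d) i j : adjmx Z = Z -> Z j i = (Z i j)^*.
Proof.
move=> hZ; have := congr1 (fun M : 'M[C]_d => M i j) hZ; rewrite /= !mxE => <-.
by rewrite conjCK.
Qed.

Lemma herm_ReIm d (Z : 'M[C]_d) (b : R) : adjmx Z = Z ->
  adjmx (Re_mx Z + (cR b * iC) *: Im_mx Z) = Re_mx Z + (cR b * iC) *: Im_mx Z.
Proof.
move=> hZ; apply/matrixP => i j; rewrite !mxE (herm_entry _ _ hZ).
rewrite Re_conj Im_conj rmorphD !rmorphM rmorphN /=.
rewrite conj_Re conj_Im cR_conj conj_iC.
by rewrite mulrN mulrN mulNr opprK.
Qed.

Lemma Re_sym d (Z : 'M[C]_d) i j : adjmx Z = Z -> Re_mx Z j i = Re_mx Z i j.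
Proof. by move=> hZ; rewrite !mxE (herm_entry _ _ hZ) Re_conj. Qed.

Lemma herm_Re d (Z : 'M[C]_d) : adjmx Z = Z -> adjmx (Re_mx Z) = Re_mx Z.
Proof.
move=> hZ; apply/matrixP => i j; rewrite !mxE conj_Re.
by rewrite (herm_entry _ _ hZ) Re_conj.
Qed.

Lemma ReIm_rect d (Z : 'M[C]_d) : Re_mx Z + (cR 1 * iC) *: Im_mx Z = Z.
Proof. by apply/matrixP => i j; rewrite !mxE cR1 mul1r -Crect. Qed.

End ReIm.


Section Main.
Variable R : rcfType.
Local Notation C := R[i].
Variables n d : nat.
Variable rho : 'M[C]_n.
Hypothesis rho_herm : adjmx rho = rho.
Hypothesis rho_pos : forall v : 'cV[C]_n, v != 0 -> 0 < (adjmx v *m rho *m v) 0 0.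
Variable drho : 'I_d -> 'M[C]_n.
Variable L : R -> 'I_d -> 'M[C]_n.
Hypothesis HL : forall b, 0 <= b <= 1 -> forall k, drho k = Sb rho b (L b k).
Hypothesis Hind : R_lin_indep (L 0).
Hypothesis Hdh : forall k, adjmx (drho k) = drho k.

Local Notation rel := (commutation_op_rel rho).
Local Notation L0 := (L 0).
Local Notation S := (Sb rho 0).

Lemma hb0 : 0 <= (0 : R) <= 1.
Proof. by rewrite lexx ler01. Qed.

Lemma drho0 k : drho k = S (L0 k).
Proof. exact: HL hb0 k. Qed.

Lemma Sb_sum b (c : 'I_d -> C) (f : 'I_d -> 'M[C]_n) :
  Sb rho b (\sum_i c i *: f i) = \sum_i c i *: Sb rho b (f i).
Proof. by rewrite linear_sum; apply: eq_bigr => i _; rewrite linearZ. Qed.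

Lemma Sb_mulr b M : Sb rho b (M *m rho) = Sb rho b M *m rho.
Proof. by rewrite /Sb mulmxDl -!scalemxAl !mulmxA. Qed.

Lemma Sb_mull b M : Sb rho b (rho *m M) = rho *m Sb rho b M.
Proof. by rewrite /Sb mulmxDr -!scalemxAr !mulmxA. Qed.

Lemma rel_S b X Y : rel X Y -> rel (Sb rho b X) (Sb rho b Y).
Proof.
rewrite /commutation_op_rel => E.
by rewrite -Sb_mulr -Sb_mull -linearD E linearZ linearB /= Sb_mulr Sb_mull.
Qed.

Lemma Sb0_adj M : adjmx (S M) = S (adjmx M).
Proof.
rewrite /Sb adjmxD !adjmxZ !adjmxM rho_herm !cR_conj addr0 subr0 addrC.
by [].
Qed.

Lemma L0herm k : adjmx (L0 k) = L0 k.
Proof.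
by apply: (Sb_inj rho_pos hb0); rewrite -Sb0_adj -drho0 Hdh.
Qed.

Lemma Cind (c : 'I_d -> C) : \sum_j c j *: L0 j = 0 -> forall i, c i = 0.
Proof.
have [a [b Hab]] := decomp c.
rewrite (eq_bigr _ (fun j _ => congr1 (fun z => z *: L0 j) (Hab j))) lc_decomp.
case/herm_zero; rewrite ?herm_Rcomb //; try exact: L0herm.
move=> /Hind Ha /Hind Hb i; by rewrite Hab Ha Hb cR0 mulr0 addr0.
Qed.

Lemma Rspan_herm X : Rspan L0 X -> adjmx X = X.
Proof. by case=> c ->; apply: herm_Rcomb; exact: L0herm. Qed.

Lemma imp12 : D_invariant rho (Rspan drho) -> D_invariant rho (Rspan L0).
Proof.
move=> H1 X Y [c ->] rXY.
have := rel_S 0 rXY; rewrite Sb_sum.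
under eq_bigr => i _ do rewrite -drho0.
move/(H1 _ _ (ex_intro _ c erefl)) => [e He].
exists e; apply: (Sb_inj rho_pos hb0); rewrite He Sb_sum.
by apply: eq_bigr => i _; rewrite drho0.
Qed.

Lemma imp21 : D_invariant rho (Rspan L0) -> D_invariant rho (Rspan drho).
Proof.
move=> H2 X Y [c ->] rXY.
have [Y' rY'] := rel_ex rho_pos (\sum_i cR (c i) *: L0 i).
have [e He] := H2 _ _ (ex_intro _ c erefl) rY'.
have := rel_S 0 rY'; rewrite Sb_sum.
under eq_bigr => i _ do rewrite -drho0.
move/(rel_uniq rho_pos rXY) ->; exists e.
by rewrite He Sb_sum; apply: eq_bigr => i _; rewrite drho0.
Qed.

Lemma imp23 : D_invariant rho (Rspan L0) -> D_invariant rho (Cspan L0).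
Proof.
move=> H2 X Y [c ->] rXY.
have [a [b Hab]] := decomp c.
move: rXY; rewrite (eq_bigr _ (fun j _ => congr1 (fun z => z *: L0 j) (Hab j))) lc_decomp.
move=> rXY.
have [Ya rYa] := rel_ex rho_pos (\sum_i cR (a i) *: L0 i).
have [Yb rYb] := rel_ex rho_pos (\sum_i cR (b i) *: L0 i).
have := rel_add (rYa) (rel_scale iC rYb).
move/(rel_uniq rho_pos rXY) ->.
apply: Cspan_add; last apply: Cspan_scale; apply: Rspan_Cspan.
  exact: (H2 _ _ (ex_intro _ a erefl) rYa).
exact: (H2 _ _ (ex_intro _ b erefl) rYb).
Qed.

Lemma imp32 : D_invariant rho (Cspan L0) -> D_invariant rho (Rspan L0).
Proof.
move=> H3 X Y hX rXY.
have hY := rel_herm rho_herm rho_pos (Rspan_herm hX) rXY.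
have [c Hc] := H3 _ _ (Rspan_Cspan hX) rXY.
have [a [b Hab]] := decomp c.
move: Hc; rewrite (eq_bigr _ (fun j _ => congr1 (fun z => z *: L0 j) (Hab j))) lc_decomp.
move=> Hc.
have : (\sum_i cR (a i) *: L0 i - Y) + iC *: (\sum_i cR (b i) *: L0 i) = 0.
  by rewrite addrAC -Hc subrr.
case/herm_zero.
- by rewrite adjmxB hY herm_Rcomb //; exact: L0herm.
- by rewrite herm_Rcomb //; exact: L0herm.
move=> /eqP; rewrite subr_eq0 => /eqP <- _; by exists a.
Qed.


Lemma hb1 : 0 <= (1 : R) <= 1.
Proof. by rewrite lexx ler01. Qed.

Lemma rel_Lb b k : 0 < b <= 1 ->
  rel (L b k) ((iC * cR b)^-1 *: (L0 k - L b k)).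
Proof.
case/andP=> b0 b1.
have hb : 0 <= b <= 1 by rewrite ltW.
have [Y rY] := rel_ex rho_pos (L b k).
have := Kb b rY; rewrite -HL // drho0 => /(Sb_inj rho_pos hb0) E.
have nz : iC * cR b != 0.
  by rewrite mulf_neq0 ?neq0Ci // gt_eqF // cR_gt0.
by rewrite E addrC addKr scalerA mulVf // scale1r.
Qed.

Lemma span_inv : (forall k, Cspan L0 (L 1 k)) -> (forall k, Cspan (L 1) (L0 k)) ->
  D_invariant rho (Cspan L0).
Proof.
move=> h1 h2 X Y hX rXY.
have [c Hc] := Cspan_trans h2 hX.
have rE : forall k, rel (L 1 k) ((iC * cR 1)^-1 *: (L0 k - L 1 k)).
  by move=> k; apply: rel_Lb; rewrite ltr01 lexx.
have := rel_sum c rE; rewrite -Hc => /(rel_uniq rho_pos rXY) ->.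
apply: Cspan_sum => k; apply: Cspan_scale.
rewrite -scaleN1r; apply: Cspan_add; first exact: Cspan_self.
by apply: Cspan_scale; apply: h1.
Qed.

Lemma imp43 : (forall b : R, 0 <= b <= 1 -> forall X, Cspan L0 X <-> Cspan (L b) X) ->
  D_invariant rho (Cspan L0).
Proof.
move=> H4; apply: span_inv => k.
  by apply/(H4 1 hb1); exact: Cspan_self.
by apply/(H4 1 hb1); exact: Cspan_self.
Qed.

Lemma coefA : D_invariant rho (Cspan L0) ->
  exists A : 'M[C]_d, forall k, rel (L0 k) (famM L0 A k).
Proof.
move=> H3.
have : forall k, exists e : 'I_d -> C, rel (L0 k) (\sum_j e j *: L0 j).
  move=> k; have [Y rY] := rel_ex rho_pos (L0 k).
  have [e He] := H3 _ _ (Cspan_self L0 k) rY.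
  by exists e; rewrite -He.
case/fin_all_exists => e He; exists (\matrix_(j, k) e k j) => k.
rewrite /famM (eq_bigr (fun j => e k j *: L0 j)) //.
by move=> j _; rewrite mxE.
Qed.

Lemma famM_ext (f g : 'I_d -> 'M[C]_n) M k :
  (forall j, f j = g j) -> famM f M k = famM g M k.
Proof. by move=> H; apply: eq_bigr => j _; rewrite H. Qed.

Lemma famM_addf (f g : 'I_d -> 'M[C]_n) a M k :
  famM (fun j => f j + a *: g j) M k = famM f M k + a *: famM g M k.
Proof.
rewrite /famM scaler_sumr -big_split; apply: eq_bigr => j _.
by rewrite scalerDr !scalerA mulrC.
Qed.

Lemma lc_zero (M : 'M[C]_d) (x : 'cV[C]_d) (f : 'I_d -> 'M[C]_n) :
  M *m x = 0 -> \sum_j x j 0 *: famM f M j = 0.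
Proof.
move=> Mx; have := lc_famM (fun j => x j 0) f M; rewrite /lc => ->.
rewrite big1 // => j _.
have -> : \sum_k M j k * x k 0 = (M *m x) j 0 by rewrite mxE.
by rewrite Mx mxE scale0r.
Qed.

Lemma x_zero (x : 'cV[C]_d) : (forall i, x i 0 = 0) -> x = 0.
Proof. by move=> H; apply/matrixP => i j; rewrite ord1 H mxE. Qed.

Local Notation J := (Jbeta 0 rho L0).
Local Notation Z := (Zmat rho L0).

Lemma J_entry i j : J i j = \tr (adjmx (L0 i) *m drho j).
Proof. by rewrite mxE ipb_Sb -HL // hb0. Qed.

Lemma zconj i j : (Z i j)^* = \tr (L0 i *m (L0 j *m rho)).
Proof.
rewrite mxE -tr_adj !adjmxM !L0herm rho_herm.
by rewrite mulmxA mxtrace_mulC.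
Qed.

Lemma Zherm : adjmx Z = Z.
Proof.
apply/matrixP => i j.
have -> : adjmx Z i j = (Z j i)^* by rewrite !mxE.
by rewrite zconj mxE mxtrace_mulC.
Qed.

Lemma J_Re : J = Re_mx Z.
Proof.
apply/matrixP => i j; rewrite mxE ipb_Sb /Sb mulmxDr -!scalemxAr mxtraceD !mxtraceZ.
rewrite [RHS]mxE ReE zconj mxE addr0 subr0 L0herm -mulmxA.
rewrite mul1r cR_half mulrDl; congr (_ + _); by rewrite mulrC.
Qed.

Lemma J_herm : adjmx J = J.
Proof. exact: (@eq_ind_r _ (Re_mx Z) (fun M : 'M[C]_d => adjmx M = M) (herm_Re Zherm) J J_Re). Qed.

Lemma J_unit : J \in unitmx.
Proof. by apply: (gram_unit rho_pos); [exact: hb0 | exact: Cind]. Qed.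

Section WithA.
Variable A : 'M[C]_d.
Hypothesis HA : forall k, rel (L0 k) (famM L0 A k).

Definition Mb (b : R) : 'M[C]_d := 1%:M + (iC * cR b) *: A.

Lemma famM_Mb b k : famM L0 (Mb b) k = L0 k + (iC * cR b) *: famM L0 A k.
Proof. by rewrite /Mb famMD famMZ famM_1. Qed.

Lemma Mb_unit b : 0 <= b <= 1 -> Mb b \in unitmx.
Proof.
move=> hb; apply: unit_of_ker => x Hx; apply: x_zero; apply: Cind.
have rXY := rel_sum (fun j => x j 0) HA.
have := Kb b rXY.
have -> : \sum_j x j 0 *: L0 j + (iC * cR b) *: (\sum_j x j 0 *: famM L0 A j) = 0.
  transitivity (\sum_j x j 0 *: famM L0 (Mb b) j); last exact: lc_zero.
  rewrite scaler_sumr -big_split; apply: eq_bigr => j _.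
  by rewrite famM_Mb scalerDr !scalerA mulrC.
by move=> E; apply: (Sb_inj rho_pos hb); rewrite E !raddf0.
Qed.

Lemma Lb_eq b k : 0 <= b <= 1 -> L b k = famM L0 (invmx (Mb b)) k.
Proof.
move=> hb; apply: (Sb_inj rho_pos hb); rewrite -HL //.
have rN := rel_sum (fun j => invmx (Mb b) j k) HA.
rewrite /famM (Kb b rN).
have -> : \sum_j invmx (Mb b) j k *: L0 j +
     (iC * cR b) *: (\sum_j invmx (Mb b) j k *: famM L0 A j) =
     famM (famM L0 (Mb b)) (invmx (Mb b)) k.
  by rewrite (famM_ext _ _ (famM_Mb b)) famM_addf.
by rewrite famM_comp mulmxV ?Mb_unit // famM_1 drho0.
Qed.

Lemma imp34 b : 0 <= b <= 1 -> forall X, Cspan L0 X <-> Cspan (L b) X.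
Proof.
move=> hb X; split; apply: Cspan_trans => k.
  rewrite -(famM_1 L0 k) -(mulVmx (Mb_unit hb)) -famM_comp.
  rewrite (famM_ext _ _ (fun j => esym (Lb_eq j hb))).
  exact: Cspan_famM.
by rewrite (Lb_eq k hb); exact: Cspan_famM.
Qed.

Lemma JA : J *m A = Im_mx Z.
Proof.
apply/matrixP => i j; rewrite mxE.
under eq_bigr => l _ do rewrite J_entry mulrC.
rewrite -tr_lin_r.
have -> : \sum_l A l j *: drho l = S (famM L0 A j).
  by rewrite /famM Sb_sumg; apply: eq_bigr => l _; rewrite drho0.
have -> : S (famM L0 A j) = cR (2^-1) *: (iC *: (L0 j *m rho - rho *m L0 j)).
  by rewrite -(HA j) /Sb addr0 subr0 mul1r -scalerDr addrC.
rewrite cR_half -!scalemxAr !mxtraceZ mulmxBr linearB /= L0herm.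
rewrite mxE ImE zconj mxE mulmxA.
by rewrite !mulmxA /iC; ring.
Qed.

Lemma H_eq b : Re_mx Z + (cR b * iC) *: Im_mx Z = J *m Mb b.
Proof.
by rewrite /Mb mulmxDr mulmx1 -scalemxAr JA J_Re mulrC.
Qed.

Lemma Jb_eq b : 0 <= b <= 1 -> Jbeta b rho (L b) = adjmx (invmx (Mb b)) *m J.
Proof.
move=> hb; apply/matrixP => i j.
rewrite mxE ipb_Sb -HL // (Lb_eq i hb) /famM tr_lin_l mxE.
by apply: eq_bigr => l _; rewrite J_entry !mxE.
Qed.

Lemma hH_test b : 0 <= b <= 1 -> J *m Mb b = adjmx (Mb b) *m J.
Proof.
move=> hb.
  have hJ := J_herm.
  by have := herm_ReIm b Zherm; rewrite H_eq adjmxM hJ => ->.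
Qed.
Lemma E_test b : 0 <= b <= 1 -> Jbeta b rho (L b) *m (invmx J *m (Re_mx Z + (cR b * iC) *: Im_mx Z) *m invmx J) = 1%:M.
Proof.
move=> hb.
have uJ := J_unit; have uM := Mb_unit hb.
  rewrite Jb_eq // H_eq (hH_test hb) !mulmxA (mulmxK uJ) (mulmxK uJ).
  by rewrite -adjmxM mulmxV // adjmx1.
Qed.
Lemma imp35 b : 0 <= b <= 1 ->
  invmx (Jbeta b rho (L b)) =
  invmx J *m (Re_mx Z + (cR b * iC) *: Im_mx Z) *m invmx J.
Proof.
move=> hb.
have E := E_test hb.
have [uJb _] := mulmx1_unit E.
by rewrite -[RHS](mulKmx uJb) E mulmx1.
Qed.
End WithA.

Lemma ind_Lb b : 0 <= b <= 1 ->
  forall c : 'I_d -> C, \sum_j c j *: L b j = 0 -> forall i, c i = 0.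
Proof.
move=> hb c E; apply: Cind; apply: (Sb_inj rho_pos hb0).
rewrite raddf0 Sb_sumg.
transitivity (Sb rho b (\sum_j c j *: L b j)); last by rewrite E raddf0.
by rewrite Sb_sumg; apply: eq_bigr => j _; rewrite -drho0 -HL.
Qed.

Lemma half11 : (1 + 1 : R) / 2 = 1.
Proof. by rewrite -mulr2n divff // pnatr_eq0. Qed.

Lemma rho_u k : rho *m L 1 k = drho k.
Proof.
rewrite (HL hb1) /Sb half11 subrr mul0r cR0 cR1 scale0r addr0 scale1r.
by [].
Qed.

Definition ip1 (X Y : 'M[C]_n) := \tr (adjmx X *m rho *m Y).

Lemma ip1_sumr (X : 'M[C]_n) (c : 'I_d -> C) (Y : 'I_d -> 'M[C]_n) :
  ip1 X (\sum_k c k *: Y k) = \sum_k c k * ip1 X (Y k).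
Proof. exact: tr_lin_r. Qed.

Lemma ip1_suml (Y : 'M[C]_n) (c : 'I_d -> C) (X : 'I_d -> 'M[C]_n) :
  ip1 (\sum_k c k *: X k) Y = \sum_k (c k)^* * ip1 (X k) Y.
Proof.
rewrite /ip1 -mulmxA tr_lin_l; apply: eq_bigr => k _; by rewrite mulmxA.
Qed.

Lemma ip1_subl X1 X2 Y : ip1 (X1 - X2) Y = ip1 X1 Y - ip1 X2 Y.
Proof. by rewrite /ip1 adjmxB !mulmxBl linearB. Qed.

Lemma ip1_subr X Y1 Y2 : ip1 X (Y1 - Y2) = ip1 X Y1 - ip1 X Y2.
Proof. by rewrite /ip1 mulmxBr linearB. Qed.

Lemma N_entry i j : Jbeta 1 rho (L 1) i j = ip1 (L 1 i) (L 1 j).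
Proof. by rewrite mxE ipb_Sb -HL ?hb1 // -rho_u /ip1 mulmxA. Qed.

Lemma Z_entry i j : Z i j = ip1 (L0 i) (L0 j).
Proof. by rewrite mxE /ip1 L0herm. Qed.

Lemma ip1_Lu j k : ip1 (L0 j) (L 1 k) = J j k.
Proof. by rewrite /ip1 -mulmxA rho_u J_entry. Qed.

Lemma ip1_uL i j : ip1 (L 1 i) (L0 j) = J j i.
Proof.
rewrite /ip1 -{1}rho_herm -adjmxM rho_u Hdh J_entry L0herm.
by rewrite mxtrace_mulC.
Qed.

Lemma J_sym i j : J j i = J i j.
Proof.
have := congr1 (fun M : 'M[C]_d => M j i) J_Re.
have := congr1 (fun M : 'M[C]_d => M i j) J_Re.
move=> /= -> ->; exact: Re_sym Zherm.
Qed.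

Lemma imp53 :
  (forall b : R, 0 <= b <= 1 ->
     invmx (Jbeta b rho (L b)) =
     invmx J *m (Re_mx Z + (cR b * iC) *: Im_mx Z) *m invmx J) ->
  D_invariant rho (Cspan L0).
Proof.
move=> H5.
set N := Jbeta 1 rho (L 1).
have uN : N \in unitmx by apply: (gram_unit rho_pos); [exact: hb1 | exact: ind_Lb hb1].
have uJ := J_unit.
have HZ : Z = J *m invmx N *m J.
  rewrite /N (H5 1 hb1) ReIm_rect !mulmxA (mulmxV uJ) mul1mx.
  by rewrite (mulmxKV uJ).
set c := invmx N *m J.
have Lfor : forall j, L0 j = famM (L 1) c j.
  move=> j; apply/eqP; rewrite -subr_eq0; apply/eqP.
  apply: (trpos_eq0 rho_pos); rewrite -/(ip1 _ _).
  rewrite ip1_subl !ip1_subr.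
  have e1 : ip1 (L0 j) (famM (L 1) c j) = ip1 (L0 j) (L0 j).
    rewrite /famM ip1_sumr -Z_entry HZ -mulmxA mxE.
    by apply: eq_bigr => k _; rewrite ip1_Lu mulrC.
  have e2 : ip1 (famM (L 1) c j) (famM (L 1) c j) = ip1 (famM (L 1) c j) (L0 j).
    rewrite /famM !ip1_suml; apply: eq_bigr => k _; congr (_ * _).
    rewrite ip1_sumr ip1_uL -J_sym.
    have -> : J k j = (N *m c) k j by rewrite /c mulmxA (mulmxV uN) mul1mx.
    by rewrite mxE; apply: eq_bigr => l _; rewrite N_entry mulrC.
  by rewrite e1 e2 !subrr.
have uc : c \in unitmx.
  apply: unit_of_ker => x Hx; apply: x_zero; apply: Cind.
  transitivity (\sum_j x j 0 *: famM (L 1) c j); last exact: lc_zero.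
  by apply: eq_bigr => j _; rewrite Lfor.
apply: span_inv => k; last by rewrite Lfor; exact: Cspan_famM.
have -> : L 1 k = famM L0 (invmx c) k.
  rewrite (famM_ext _ _ Lfor) famM_comp mulmxV // famM_1 //.
exact: Cspan_famM.
Qed.

Lemma main_tfae :
  [<-> D_invariant rho (Rspan drho);
       D_invariant rho (Rspan (L 0));
       D_invariant rho (Cspan (L 0));
       forall beta : R, 0 <= beta <= 1 ->
         forall X, Cspan (L 0) X <-> Cspan (L beta) X;
       forall beta : R, 0 <= beta <= 1 ->
         invmx (Jbeta beta rho (L beta)) =
         invmx (Jbeta 0 rho (L 0)) *m
           (Re_mx (Zmat rho (L 0)) + (cR beta * iC) *: (Im_mx (Zmat rho (L 0)))) *m
           invmx (Jbeta 0 rho (L 0))].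
Proof.
tfae=> [H1|H2|H3|H4|H5].
- exact: imp12 H1.
- exact: imp23 H2.
- have [A HA] := coefA H3.
  move=> b hb X; apply: (imp34 HA hb).

- have H3 := imp43 H4.
  have [A HA] := coefA H3.
  move=> b hb; exact: (@imp35 A HA b hb).
- exact: imp21 (imp32 (imp53 H5)).
Qed.

End Main.

Theorem lemma11 (R : realType) (n d : nat) (rho : 'M[R[i]]_n)
  (drho : 'I_d -> 'M[R[i]]_n) (L : R -> 'I_d -> 'M[R[i]]_n) :
  density rho -> strictly_positive rho ->
  (forall k, herm_op (drho k)) -> (forall k, \tr (drho k) = 0) ->
  (forall beta : R, 0 <= beta <= 1 -> forall k, beta_LD_eq beta rho (drho k) (L beta k)) ->
  R_lin_indep (L 0) ->
  [<-> D_invariant rho (Rspan drho);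
       D_invariant rho (Rspan (L 0));
       D_invariant rho (Cspan (L 0));
       forall beta : R, 0 <= beta <= 1 ->
         forall X, Cspan (L 0) X <-> Cspan (L beta) X;
       forall beta : R, 0 <= beta <= 1 ->
         invmx (Jbeta beta rho (L beta)) =
         invmx (Jbeta 0 rho (L 0)) *m
           (Re_mx (Zmat rho (L 0)) + (cR beta * iC) *: (Im_mx (Zmat rho (L 0)))) *m
           invmx (Jbeta 0 rho (L 0))].
Proof.
move=> _ [rho_herm rho_pos] Hdh _ HL0 Hind.
by apply: main_tfae.
Qed.
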